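(* Let $h,k$ be integers with $k>0$, $\gcd(h,k)=1$ and $h+k$ odd. Then $$B_{1}(h,k)=2(1-h)\bigl(s(h,k)-2s(h+k,2k)\bigr).$$
   Context: $[x]$ denotes the greatest integer $\le x$, and $((x))=x-[x]-\tfrac12$ if $x\notin\mathbb{Z}$, $((x))=0$ if $x\in\mathbb{Z}$. For integers $a,b$ with $b>0$: the Dedekind sum is $s(a,b)=\sum_{j=1}^{b-1}\left(\left(\frac{aj}{b}\right)\right)\left(\left(\frac{j}{b}\right)\right)$, and (for $\gcd(a,b)=1$) $$B_{1}(a,b)=\sum_{j=1}^{b-1}(-1)^{j+\left[\frac{aj}{b}\right]}\left[\frac{aj}{b}\right].$$ *)

(* Defs.v *)
From mathcomp Require Import all_boot all_order all_algebra.
Set Implicit Arguments. Unset Strict Implicit. Unset Printing Implicit Defensive.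
Import Order.TTheory GRing.Theory Num.Theory.
Local Open Scope ring_scope.

Definition gint (x : rat) : int := Num.floor x.

Definition sawtooth (x : rat) : rat :=
  if x \is a Num.int then 0 else x - (gint x)%:~R - 1 / 2.

Definition dedekind_sum (a b : int) : rat :=
  \sum_(1 <= j < `|b|%N)
    sawtooth ((a * j%:Z)%:~R / b%:~R) * sawtooth ((j%:Z)%:~R / b%:~R).

Definition B1 (a b : int) : rat :=
  \sum_(1 <= j < `|b|%N)
    let f := gint ((a * j%:Z)%:~R / b%:~R) in
    ((-1 : rat) ^ (j%:Z + f)) * f%:~R.

(* Main.v *)
Require Import Defs.
From mathcomp Require Import all_boot all_order all_algebra.
From mathcomp Require Import ring lra zify.
Import Order.TTheory GRing.Theory Num.Theory.
Local Open Scope ring_scope.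

Lemma L0 (x t : rat) (m : int) : x = m%:~R + t -> 0 < t < 1 ->
  gint x = m /\ sawtooth x = t - 1/2.
Proof.
move=> -> /andP[t0 t1].
have Hf : gint (m%:~R + t) = m.
  apply: floor_def; rewrite intrD lerDl ltW //= ltrD2l //.
split=> //; rewrite /sawtooth.
have -> : (m%:~R + t) \is a Num.int = false.
  apply/negbTE; rewrite intrEfloor; rewrite -/(gint _) Hf.
  apply/negP=> /eqP H; lra.
by rewrite Hf; ring.
Qed.

Lemma floorN_nint (R : archiRealFieldType) (x : R) : x \isn't a Num.int ->
  Num.floor (- x) = - Num.floor x - 1.
Proof.
move=> Hx; rewrite floorNceil opprK ceil_floor (negbTE Hx) /=; ring.
Qed.

Lemma saw_odd (m : int) (x : rat) : sawtooth (m%:~R - x) = - sawtooth x.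
Proof.
rewrite /sawtooth.
case: (boolP (x \is a Num.int)) => Hx.
  by rewrite rpredB ?intr_int // oppr0.
have -> : (m%:~R - x) \is a Num.int = false.
  apply/negbTE; apply: contra Hx => H.
  have -> : x = m%:~R - (m%:~R - x) by ring.
  by rewrite rpredB ?intr_int.
have E : Num.floor (- x) = - Num.floor x - 1.
  exact: floorN_nint.
rewrite /gint floorDzr ?intr_int ?rpredN // intrKfloor E.
rewrite !intrD /= !mulrNz -[1%:~R]/(1:rat). lra.
Qed.

Lemma Lfrac (x r d : rat) (m : int) : 0 < r -> r < d -> x = m%:~R + r / d ->
  gint x = m /\ sawtooth x = r / d - 1/2.
Proof.
move=> r0 rd ->; apply: L0 => //.
have d0 : 0 < d by apply: lt_trans rd.
by rewrite divr_gt0 //= ltr_pdivrMr // mul1r.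
Qed.

Lemma sgnz (m e : int) : (e = 0 \/ e = 1) ->
  (-1 : rat) ^ (2 * m + e) = 1 - 2 * e%:~R.
Proof.
have u : (-1 : rat) \is a GRing.unit by rewrite unitrN unitr1.
rewrite exprzDr // -exprz_exp.
have -> : (-1 : rat) ^ (2 : int) = 1 by rewrite -exprnP sqrrN expr1n.
rewrite exp1rz mul1r.
by case=> ->; rewrite ?expr0z ?expr1z /=; lra.
Qed.

Definition ta (n : nat) (h : int) (j : nat) : rat :=
  sawtooth ((h * j%:Z)%:~R / (Posz n)%:~R) * sawtooth ((j%:Z)%:~R / (Posz n)%:~R).
Definition tb (n : nat) (h : int) (j : nat) : rat :=
  sawtooth (((h + Posz n) * j%:Z)%:~R / (2 * Posz n)%:~R)
  * sawtooth ((j%:Z)%:~R / (2 * Posz n)%:~R).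
Definition tc (n : nat) (h : int) (j : nat) : rat :=
  let f := gint ((h * j%:Z)%:~R / (Posz n)%:~R) in
    ((-1 : rat) ^ (j%:Z + f)) * f%:~R.

Lemma terms (n j : nat) (h f r m e : int) : (0 < j)%N -> (j < n)%N ->
  h * j%:Z = f * n%:Z + r -> 0 < r -> r < n%:Z -> f + j%:Z = 2 * m + e ->
  (e = 0 \/ e = 1) ->
  [/\ ta n h j = (r%:~R / n%:R - 1/2) * (j%:R / n%:R - 1/2),
      tb n h j = ((e%:~R * n%:R + r%:~R) / (2 * n%:R) - 1/2) * (j%:R / (2 * n%:R) - 1/2)
    & tc n h j = (1 - 2 * e%:~R) * f%:~R].
Proof.
move=> j0 jn Hhj r0 rn Hfj He.
have n0 : (0 < n)%N by apply: leq_trans jn.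
have n0' : (n%:R : rat) != 0 by rewrite pnatr_eq0 -lt0n.
have rR0 : (0 : rat) < r%:~R by rewrite ltr0z.
have rRn : (r%:~R : rat) < n%:R by rewrite -(ltr_int rat) in rn.
have jR0 : (0 : rat) < j%:R by rewrite ltr0n.
have jRn : (j%:R : rat) < n%:R by rewrite ltr_nat.
have eR : (e%:~R : rat) = 0 \/ (e%:~R : rat) = 1 by case: He => ->; [left|right].
have HhjR : (h%:~R * j%:R : rat) = f%:~R * n%:R + r%:~R.
  by have := congr1 (fun z : int => (z%:~R : rat)) Hhj; rewrite /= !intrD !intrM.
have HfjR : (f%:~R + j%:R : rat) = 2 * m%:~R + e%:~R.
  by have := congr1 (fun z : int => (z%:~R : rat)) Hfj; rewrite /= !intrD !intrM.
have [g1 s1] : gint ((h * j%:Z)%:~R / (Posz n)%:~R) = f /\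
    sawtooth ((h * j%:Z)%:~R / (Posz n)%:~R) = r%:~R / n%:R - 1/2.
  apply: Lfrac rR0 rRn _.
  rewrite intrM /= HhjR; field => //.
have [_ s2] : gint ((j%:Z)%:~R / (Posz n)%:~R) = 0 /\
    sawtooth ((j%:Z)%:~R / (Posz n)%:~R) = j%:R / n%:R - 1/2.
  apply: Lfrac jR0 jRn _.
  rewrite /=; field => //.
have [_ s4] : gint ((j%:Z)%:~R / (2 * Posz n)%:~R) = 0 /\
    sawtooth ((j%:Z)%:~R / (2 * Posz n)%:~R) = j%:R / (2 * n%:R) - 1/2.
  apply: Lfrac jR0 _ _; first by lra.
  rewrite intrM /=; field => //.
have [_ s3] : gint (((h + Posz n) * j%:Z)%:~R / (2 * Posz n)%:~R) = m /\
    sawtooth (((h + Posz n) * j%:Z)%:~R / (2 * Posz n)%:~R)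
      = (e%:~R * n%:R + r%:~R) / (2 * n%:R) - 1/2.
  apply: Lfrac _ _ _.
  - case: eR => ->; lra.
  - case: eR => ->; lra.
  rewrite !intrM intrD /= mulrDl HhjR.
  have -> : (m%:~R : rat) = (f%:~R + j%:R - e%:~R) / 2 by rewrite HfjR; field.
  field => //.
split.
- by rewrite /ta s1 s2.
- by rewrite /tb s3 s4.
by rewrite /tc g1 addrC Hfj sgnz.
Qed.

Lemma modpos (n j : nat) (h : int) : gcdz h n = 1 -> (0 < j)%N -> (j < n)%N ->
  0 < (h * j %% n)%Z.
Proof. move=> H j0 jn.
have cop : coprimez n h by rewrite /coprimez gcdzC H.
rewrite lt_neqAle modz_ge0; last by apply/eqP=> E; lia.
rewrite andbT eq_sym; apply/negP=> /eqP E.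
have : (n %| h * j)%Z by apply/dvdz_mod0P.
rewrite Gauss_dvdzr // dvdzE /= => /dvdn_leq. lia.
Qed.

Definition TT (n : nat) (h : int) (j : nat) : rat :=
  tc n h j - 2 * (1 - h%:~R) * (ta n h j - 2 * (2 * tb n h j)).

Lemma Tsym (n j : nat) (h : int) : gcdz h n = 1 -> odd (absz (h + n)) ->
  (0 < j)%N -> (j < n)%N -> TT n h j + TT n h (n - j) = 0.
Proof.
move=> cop odd_hn j0 jn.
have n0 : (0 < n)%N by apply: leq_trans jn.
set f := (h * j %/ n)%Z; set r := (h * j %% n)%Z.
have Hhj : h * j%:Z = f * n%:Z + r by rewrite /f /r -divz_eq.
have r0 : 0 < r by apply: modpos.
have rn : r < n%:Z by rewrite /r ltz_pmod //; lia.
set m := ((f + j) %/ 2)%Z; set e := ((f + j) %% 2)%Z.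
have Hfj : f + j%:Z = 2 * m + e by rewrite /m /e; lia.
have He : e = 0 \/ e = 1 by rewrite /e; lia.
have [p Hp] : exists p, h + n%:Z = 2 * p + 1 by exists ((h + n) %/ 2)%Z; lia.
clearbody f r m e.
have [a1 b1 c1] := @terms n j h f r m e j0 jn Hhj r0 rn Hfj He.
have jle : (j <= n)%N by apply: ltnW.
have j0' : (0 < n - j)%N by rewrite subn_gt0.
have jn' : (n - j < n)%N by rewrite ltn_subrL j0 n0.
have Hhj' : h * (n - j)%N%:Z = (h - 1 - f) * n%:Z + (n%:Z - r).
  by rewrite -(subzn jle) mulrBr Hhj; ring.
have r0' : 0 < n%:Z - r by lia.
have rn' : n%:Z - r < n%:Z by lia.
have Hfj' : (h - 1 - f) + (n - j)%N%:Z = 2 * (p - m - e) + e.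
  rewrite -(subzn jle); lia.
have [a2 b2 c2] := @terms n (n - j) h (h - 1 - f) (n%:Z - r) (p - m - e) e j0' jn' Hhj' r0' rn' Hfj' He.
rewrite /TT a1 b1 c1 a2 b2 c2 (natrB _ jle) !intrB /=.
have eR : (e%:~R : rat) = 0 \/ (e%:~R : rat) = 1 by case: He => ->; [left|right].
have n0' : (n%:R : rat) != 0 by rewrite pnatr_eq0 -lt0n.
have -> : ((Posz n)%:~R : rat) = n%:R by [].
have -> : ((1 : int)%:~R : rat) = 1 by [].
move: n0'; set N := (n%:R : rat); set H := (h%:~R : rat); set F := (f%:~R : rat).
set R := (r%:~R : rat); set J := (j%:R : rat) => n0'.
case: eR => ->; field => //.
Qed.

Lemma Cz (m : nat) : ((Posz m)%:~R : rat) = m%:R. Proof. by []. Qed.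
Lemma C1 : ((1 : int)%:~R : rat) = 1. Proof. by []. Qed.

Lemma tb_sym (n i : nat) (h : int) : (0 < n)%N -> (i <= 2 * n)%N ->
  tb n h (2 * n - i) = tb n h i.
Proof.
move=> n0 iln.
have n0' : (n%:R : rat) != 0 by rewrite pnatr_eq0 -lt0n.
rewrite /tb -(subzn iln).
have E1 : (((h + Posz n) * (Posz (2 * n)%N - Posz i))%:~R / (2 * Posz n)%:~R : rat)
   = (h + Posz n)%:~R - ((h + Posz n) * Posz i)%:~R / (2 * Posz n)%:~R.
  rewrite !intrM !intrB !intrD /= !Cz ?C1 natrM ?mulr1n; field => //.
have E2 : (((Posz (2 * n)%N - Posz i))%:~R / (2 * Posz n)%:~R : rat)
   = (1 : int)%:~R - (Posz i)%:~R / (2 * Posz n)%:~R.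
  rewrite !intrM !intrB /= !Cz ?C1 natrM ?mulr1n; field => //.
by rewrite E1 E2 !saw_odd mulrNN.
Qed.

Lemma tb_mid (n : nat) (h : int) : (0 < n)%N -> tb n h n = 0.
Proof.
move=> n0.
have n0' : (0 : rat) < n%:R by rewrite ltr0n.
rewrite /tb.
have [_ ->] : gint ((Posz n)%:~R / (2 * Posz n)%:~R) = 0 /\
   sawtooth ((Posz n)%:~R / (2 * Posz n)%:~R) = n%:R / (2 * n%:R) - 1/2.
  apply: (Lfrac _ (n%:R) (2 * n%:R) 0 n0'); first by lra.
  by rewrite intrM /= add0r.
have -> : (n%:R / (2 * n%:R) - 1/2 : rat) = 0 by field; lra.
by rewrite mulr0.
Qed.

Lemma sum_tb (n : nat) (h : int) : (0 < n)%N ->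
  \sum_(1 <= j < 2 * n) tb n h j = 2 * \sum_(1 <= j < n) tb n h j.
Proof.
move=> n0.
rewrite (big_cat_nat _ (n := n)) //=; last by lia.
rewrite (big_ltn (m := n)); last by lia.
rewrite tb_mid // add0r.
have -> : \sum_(n.+1 <= j < 2 * n) tb n h j = \sum_(1 <= j < n) tb n h j.
  rewrite big_nat_rev -[n.+1]add1n big_addn.
  have -> : (2 * n - n = n)%N by lia.
  apply: eq_big_nat => i /andP[i1 iln].
  have -> : (1 + n + 2 * n - (i + n).+1 = 2 * n - i)%N by lia.
  have iln2 : (i <= 2 * n)%N by lia.
  exact: tb_sym n0 iln2.
by rewrite mulr2n mulrDl mul1r.
Qed.

Lemma sumTT (n : nat) (h : int) : gcdz h n = 1 -> odd (absz (h + n)) ->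
  \sum_(1 <= j < n) TT n h j = 0.
Proof.
move=> cop odd_hn.
have E : \sum_(1 <= j < n) TT n h j = \sum_(1 <= j < n) TT n h (n - j).
  rewrite big_nat_rev; apply: eq_big_nat => i /andP[i1 iln].
  by have -> : (1 + n - i.+1 = n - i)%N by lia.
have E2 : \sum_(1 <= j < n) TT n h j + \sum_(1 <= j < n) TT n h (n - j) = 0.
  rewrite -big_split /=; apply: big1_seq => i /andP[_]; rewrite mem_index_iota => /andP[i1 iln].
  by apply: Tsym.
move: E2; rewrite -E; lra.
Qed.

Theorem theorem19 (h k : int) :
  0 < k -> gcdz h k = 1 -> odd (absz (h + k)) ->
  B1 h k = 2 * (1 - h%:~R) * (dedekind_sum h k - 2 * dedekind_sum (h + k) (2 * k)).
Proof.
case: k => [n|n] //= n0 cop odd_hn.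
have n0' : (0 < n)%N by [].
have S := @sumTT n h cop odd_hn.
have eB : B1 h n = \sum_(1 <= j < n) tc n h j by [].
have eA : dedekind_sum h n = \sum_(1 <= j < n) ta n h j by [].
have eC : dedekind_sum (h + n) (2 * n) = \sum_(1 <= j < 2 * n) tb n h j.
  rewrite /dedekind_sum.
  have -> : absz (2 * Posz n) = (2 * n)%N by lia.
  by [].
rewrite eB eA eC sum_tb //.
move: S; rewrite /TT sumrB -mulr_sumr sumrB -mulr_sumr -mulr_sumr.
lra.
Qed.
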